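(* For all $\alpha,\beta\ge1$ and $d\in\mathbb{Z}\setminus\{0\}$, $\widetilde{\epsilon'_d}(\mathcal{R}_{\alpha,\beta})\subset\mathcal{Q}_{\alpha,\beta}$.
   Context: Let $k$ be a field of characteristic zero, $n\ge3$, $k[t,\mathbf{x}]=k[t,x_1,\ldots,x_n]$. Let $\widetilde{D'}=\sum_{j=2}^{n}(j-1)\,x_{j-1}\,\partial/\partial x_j$ as a derivation of $k[t,\mathbf{x}]$ killing $t$, and for $d\in k$, $\widetilde{\epsilon'_d}=\exp(d\widetilde{D'})$, $\exp E(g)=\sum_{i\ge0}E^i(g)/i!$. For nonzero $p=\sum u_{i_0,\ldots,i_n}t^{i_0}x_1^{i_1}\cdots x_n^{i_n}$, $\mathrm{supp}(p)$ is the set of exponent vectors with nonzero coefficient, $\deg_{\mathbf w}(p)=\max\{\sum_j i_jw_j:(i_0,\ldots,i_n)\in\mathrm{supp}(p)\}$, and $\mathrm{lt}(p)$ is the leading term for the lexicographic order with $t>x_1>\cdots>x_n$. Let $\mathbf{w}_3=(0,1,\ldots,1)$ (weight $0$ on $t$, $1$ on each $x_j$). For $\alpha,\beta\ge1$: $\mathcal{Q}_{\alpha,\beta}$ is the set of nonzero $p$ with $\deg_{\mathbf{w}_3}(p)\le\beta$ and $\mathrm{lt}(p)\in k^*t^\alpha x_1^\beta$; $\mathcal{R}_{\alpha,\beta}$ is the set of nonzero $p$ with $\deg_{\mathbf{w}_3}(p)\le\beta$ and $\mathrm{lt}(p)\in k^*t^\alpha x_n^\beta$. *)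

(* Defs.v *)
From HB Require Import structures.
From mathcomp Require Import all_boot all_order all_algebra.
From mathcomp Require Import mpoly.
Set Implicit Arguments. Unset Strict Implicit. Unset Printing Implicit Defensive.
Import Order.TTheory GRing.Theory Num.Theory.
Local Open Scope ring_scope.

(* Conventions: k[t, x_1, ..., x_n] is {mpoly k[n.+1]}; variable index 0 is t,
   variable index j (1 <= j <= n) is x_j. *)

Definition Dprime (k : fieldType) (n : nat) (p : {mpoly k[n.+1]}) : {mpoly k[n.+1]} :=
  \sum_(j < n.+1 | (2 <= j)%N)
     ((j.-1)%:R * 'X_(inord j.-1 : 'I_n.+1)) * p^`M(j).

(* exp(d D')(g) = sum_{i >= 0} d^i D'^i(g) / i!.  D' is locally nilpotent:
   D' lowers the weight sum_j j*m_j of every monomial by 1, so D'^i g = 0 for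
   i > n * (msize g); the sum is therefore truncated at that finite bound,
   which does not change its value. *)
Definition expDprime (k : fieldType) (n : nat) (d : k) (g : {mpoly k[n.+1]})
  : {mpoly k[n.+1]} :=
  \sum_(i < (n * msize g).+1) ((d ^+ i) / (i`!)%:R) *: iter i (@Dprime k n) g.

(* strict lexicographic order on exponent vectors, t > x_1 > ... > x_n *)
Definition lex_lt (N : nat) (m1 m2 : 'X_{1..N}) : Prop :=
  exists i : 'I_N, (forall j : 'I_N, (j < i)%N -> m1 j = m2 j) /\ (m1 i < m2 i)%N.

Definition lex_lead_is (k : fieldType) (N : nat) (p : {mpoly k[N]}) (mon : 'X_{1..N}) : Prop :=
  mon \in msupp p /\ (forall m, m \in msupp p -> m <> mon -> lex_lt m mon).

(* deg_{w3}(p) <= b, w3 = (0,1,...,1) : weight 0 on t (index 0), 1 on each x_j *)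
Definition degw3_le (k : fieldType) (n : nat) (p : {mpoly k[n.+1]}) (b : nat) : Prop :=
  forall m, m \in msupp p -> (\sum_(j < n.+1 | (1 <= j)%N) m j <= b)%N.

Definition mon_t_x (n : nat) (a b : nat) (j : 'I_n.+1) : 'X_{1..n.+1} :=
  [multinom (if i == ord0 then a else 0%N) + (if i == j then b else 0%N) | i < n.+1].

Definition Qset (k : fieldType) (n : nat) (a b : nat) (p : {mpoly k[n.+1]}) : Prop :=
  p != 0 /\ degw3_le p b /\ lex_lead_is p (@mon_t_x n a b (inord 1)).

Definition Rset (k : fieldType) (n : nat) (a b : nat) (p : {mpoly k[n.+1]}) : Prop :=
  p != 0 /\ degw3_le p b /\ lex_lead_is p (@mon_t_x n a b (inord n)).

(* Main.v *)
Require Import Defs.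
From HB Require Import structures.
From mathcomp Require Import all_boot all_order all_algebra.
From mathcomp Require Import mpoly.
From mathcomp Require Import zify.
Import Order.TTheory GRing.Theory Num.Theory.
Local Open Scope ring_scope.

Lemma split1 {N : nat} {i : 'I_N} {m : 'X_{1..N}} : (0 < m i)%N ->
  (U_(i) + (m - U_(i)))%MM = m.
Proof.
move=> h; apply/mnmP=> j; rewrite mnmDE mnmBE mnm1E.
case: eqP => [<-|_]; last by rewrite subn0.
by rewrite add1n subn1 prednK.
Qed.

Lemma coefMX (k : fieldType) (N : nat) (q : {mpoly k[N]}) (i : 'I_N) m :
  (q * 'X_i)@_m = if (0 < m i)%N then q@_(m - U_(i))%MM else 0.
Proof.
case: ifP => h.
  by rewrite -{1}(split1 h) mcoeffMX.
apply/eqP; rewrite mcoeff_eq0 (perm_mem (msuppMX _ _)); apply/mapP => [[m' _ e]].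
by move: h; rewrite e mnmDE mnm1E eqxx.
Qed.

Lemma Dprime_coef (k : fieldType) (n : nat) (q : {mpoly k[n.+1]}) m :
  (Dprime q)@_m = \sum_(j < n.+1 | (2 <= j)%N)
     (j.-1)%:R * (q^`M(j) * 'X_(inord j.-1 : 'I_n.+1))@_m.
Proof.
rewrite /Dprime raddf_sum; apply: eq_bigr => j _.
by rewrite -mulrA mulr_natl raddfMn /= mulr_natl mulrC.
Qed.

Definition zin {k : fieldType} {N : nat} (P : 'X_{1..N} -> bool) (q : {mpoly k[N]}) :=
  forall m, ~~ P m -> q@_m = 0.

Lemma D_zin {k : fieldType} {n : nat} (P Q : 'X_{1..n.+1} -> bool) (q : {mpoly k[n.+1]}) :
 (forall (u : 'X_{1..n.+1}) (j : 'I_n.+1), (2 <= j)%N -> P (U_(j) + u)%MM ->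
     Q (U_(inord j.-1) + u)%MM) ->
 zin P q -> zin Q (Dprime q).
Proof.
move=> hs hq m hm; rewrite Dprime_coef big1 // => j hj.
rewrite coefMX; case: ifP => h; last by rewrite mulr0.
rewrite mcoeff_deriv hq ?mul0rn ?mulr0 //.
apply: contra hm => hP; rewrite -(split1 h); apply: hs => //.
by rewrite addmC.
Qed.

Lemma iterD_zin {k : fieldType} {n : nat} (P : nat -> 'X_{1..n.+1} -> bool) (q : {mpoly k[n.+1]}) :
 (forall i (u : 'X_{1..n.+1}) (j : 'I_n.+1), (2 <= j)%N -> P i (U_(j) + u)%MM ->
     P i.+1 (U_(inord j.-1) + u)%MM) ->
 zin (P 0%N) q -> forall i, zin (P i) (iter i (@Dprime k n) q).
Proof.
move=> hs hq; elim=> [|i IH] //=.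
by apply: D_zin IH => u j; apply: hs.
Qed.

Lemma E_zin {k : fieldType} {n : nat} (P : 'X_{1..n.+1} -> bool) (q : {mpoly k[n.+1]}) d :
 (forall (u : 'X_{1..n.+1}) (j : 'I_n.+1), (2 <= j)%N -> P (U_(j) + u)%MM ->
     P (U_(inord j.-1) + u)%MM) ->
 zin P q -> zin P (expDprime d q).
Proof.
move=> hs hq m hm; rewrite /expDprime raddf_sum /= big1 // => i _.
by rewrite mcoeffZ (@iterD_zin _ _ (fun _ => P)) ?mulr0.
Qed.

Lemma D_lin {k : fieldType} {n : nat} (a : k) (x y : {mpoly k[n.+1]}) :
  Dprime (a *: x + y) = a *: Dprime x + Dprime y.
Proof.
rewrite /Dprime scaler_sumr -big_split; apply: eq_bigr => j _ /=.
by rewrite mderivD mderivZ mulrDr scalerAr.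
Qed.

Lemma iter_lin {k : fieldType} {n : nat} (a : k) (x y : {mpoly k[n.+1]}) i :
  iter i (@Dprime k n) (a *: x + y) = a *: iter i (@Dprime k n) x + iter i (@Dprime k n) y.
Proof. by elim: i => [|i IH] //=; rewrite IH D_lin. Qed.

Lemma E_coef {k : fieldType} {n : nat} (d : k) (q : {mpoly k[n.+1]}) m :
  (expDprime d q)@_m = \sum_(i < (n * msize q).+1)
     (d ^+ i / (i`!)%:R) * (iter i (@Dprime k n) q)@_m.
Proof. by rewrite /expDprime raddf_sum; apply: eq_bigr => i _; rewrite /= mcoeffZ. Qed.

Definition NN {k : fieldType} {N : nat} (q : {mpoly k[N]}) :=
  forall m, exists c : nat, q@_m = c%:R.

Lemma NN_term {k : fieldType} {n : nat} (q : {mpoly k[n.+1]}) (j : 'I_n.+1) m :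
  NN q -> exists c : nat,
   (j.-1)%:R * (q^`M(j) * 'X_(inord j.-1 : 'I_n.+1))@_m = c%:R.
Proof.
move=> h; rewrite coefMX; case: ifP => _; last by exists 0%N; rewrite mulr0.
rewrite mcoeff_deriv; have [c ->] := h ((m - U_(inord j.-1)) + U_(j))%MM.
exists (j.-1 * (c * ((m - U_(inord j.-1))%MM j).+1))%N; by rewrite !natrM; congr (_ * _); rewrite mulr_natr.
Qed.

Lemma NN_D {k : fieldType} {n : nat} (q : {mpoly k[n.+1]}) : NN q -> NN (Dprime q).
Proof.
move=> h m; rewrite Dprime_coef.
apply: (big_ind (fun x : k => exists c : nat, x = c%:R)).
- by exists 0%N.
- by move=> x y [a ->] [b ->]; exists (a + b)%N; rewrite natrD.
- by move=> j _; apply: NN_term.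
Qed.

Lemma NN_iter {k : fieldType} {n : nat} (q : {mpoly k[n.+1]}) i :
  NN q -> NN (iter i (@Dprime k n) q).
Proof. by move=> h; elim: i => [|i IH] //=; apply: NN_D. Qed.

Lemma inordm1 {n : nat} (j : 'I_n.+1) : (inord j.-1 : 'I_n.+1) = j.-1 :> nat.
Proof. by rewrite inordK // (leq_ltn_trans (leq_pred _) (ltn_ord j)). Qed.

Lemma natr_neq0 {k : fieldType} (chark0 : [pchar k] =i pred0) (c : nat) :
  (c != 0)%N -> (c%:R : k) != 0.
Proof. by move=> h; rewrite (pcharf0P _).1. Qed.

Lemma inord_pred_neq {n : nat} (j : 'I_n.+1) : (2 <= j)%N -> (inord j.-1 : 'I_n.+1) != j.
Proof.
move=> hj; apply/eqP => e; have := congr1 (@nat_of_ord _) e; rewrite inordm1.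
move: hj; case: (nat_of_ord j) => [|[|m]] //= _; lia.
Qed.

Lemma pos_D {k : fieldType} (chark0 : [pchar k] =i pred0) {n : nat}
  (q : {mpoly k[n.+1]}) (u : 'X_{1..n.+1}) (j : 'I_n.+1) :
  NN q -> (2 <= j)%N -> q@_(U_(j) + u)%MM != 0 ->
  (Dprime q)@_(U_(inord j.-1) + u)%MM != 0.
Proof.
move=> hN hj hq; rewrite Dprime_coef (bigD1 j) //=.
have [c' ->] : exists c : nat, \sum_(i < n.+1 | (2 <= i)%N && (i != j))
   (i.-1)%:R * (q^`M(i) * 'X_(inord i.-1 : 'I_n.+1))@_(U_(inord j.-1) + u)%MM = c%:R.
  apply: (big_ind (fun x : k => exists c : nat, x = c%:R)).
  - by exists 0%N.
  - by move=> x y [a ->] [b ->]; exists (a + b)%N; rewrite natrD.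
  - by move=> i _; apply: NN_term.
have hpos : (0 < (U_(inord j.-1) + u)%MM (inord j.-1))%N by rewrite mnmDE mnm1E eqxx.
rewrite coefMX hpos addmC addmK mcoeff_deriv.
have hne : (inord j.-1 : 'I_n.+1) != j.
  exact: inord_pred_neq.
rewrite [(u + _)%MM]addmC.
move: hq; have [c ->] := hN (U_(j) + u)%MM => hc.
have -> : (c%:R *+ (u j).+1 : k) = (c * (u j).+1)%:R by rewrite natrM mulr_natr.
rewrite -natrM -natrD natr_neq0 //.
have c0 : (c != 0)%N by apply: contra hc => /eqP ->.
rewrite addn_eq0 negb_and; apply/orP; left.
by rewrite !muln_eq0 (negbTE c0) /=; case: (nat_of_ord j) hj => [|[|]].
Qed.

Inductive reach {n : nat} : nat -> 'X_{1..n.+1} -> 'X_{1..n.+1} -> Prop :=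
| reach0 m : reach 0 m m
| reachS i m u (j : 'I_n.+1) : reach i m (U_(j) + u)%MM -> (2 <= j)%N ->
     reach i.+1 m (U_(inord j.-1) + u)%MM.

Lemma reach_pos {k : fieldType} (chark0 : [pchar k] =i pred0) {n : nat}
  (q : {mpoly k[n.+1]}) m : NN q -> q@_m != 0 ->
  forall i m', reach i m m' -> (iter i (@Dprime k n) q)@_m' != 0.
Proof.
move=> hN hq i m' r; elim: r hq => [//|i0 m0 u j r IH hj] hq /=.
by apply: pos_D => //; [apply: NN_iter | exact: IH].
Qed.

Lemma reach_trans {n : nat} {a b : nat} {m1 m2 m3 : 'X_{1..n.+1}} :
  reach a m1 m2 -> reach b m2 m3 -> reach (a + b) m1 m3.
Proof.
move=> h1 h2; elim: h2 h1 => [m|i m u j r IH hj] h1; first by rewrite addn0.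
by rewrite addnS; apply: reachS => //; apply: IH.
Qed.

Lemma move_one {n : nat} (j : nat) (u : 'X_{1..n.+1}) : (1 <= j <= n)%N ->
  reach j.-1 (U_(inord j) + u)%MM (U_(inord 1) + u)%MM.
Proof.
elim: j => [//|j IH] /andP [h1 h2].
case: j IH h1 h2 => [_ _ _|j IH _ h2] /=; first exact: reach0.
have r1 : reach 1 (U_(inord j.+2) + u)%MM (U_(inord j.+1) + u)%MM.
  have -> : (inord j.+1 : 'I_n.+1) = inord (@inord n j.+2).-1.
    by rewrite inordK // ltnS.
  apply: reachS; first exact: reach0.
  by rewrite inordK // ltnS.
have := reach_trans r1 (IH _); rewrite add1n; apply.
by apply/andP; split => //; apply: ltnW.
Qed.

Lemma addmCA' {N : nat} (x y w : 'X_{1..N}) : (x + (y + w) = y + (x + w))%MM.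
Proof. by rewrite addmA (addmC x) -addmA. Qed.

Lemma all_units {n : nat} (hn : (1 <= n)%N) (b : nat) (w : 'X_{1..n.+1}) :
  reach (n.-1 * b) (U_(inord n) *+ b + w)%MM (U_(inord 1) *+ b + w)%MM.
Proof.
elim: b w => [|b IH] w; first by rewrite muln0; exact: reach0.
rewrite !mulmS -!addmA mulnS.
apply: reach_trans; first by apply: move_one; rewrite hn leqnn.
rewrite (addmCA' (U_(inord 1))%MM (U_(inord 1) *+ b)%MM w) (addmCA' (U_(inord 1))%MM (U_(inord n) *+ b)%MM w); exact: IH.
Qed.

Definition omega {N : nat} (m : 'X_{1..N}) := (\sum_(l < N) l * m l)%N.

Lemma omegaD {N : nat} (m1 m2 : 'X_{1..N}) : omega (m1 + m2)%MM = (omega m1 + omega m2)%N.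
Proof.
rewrite /omega -big_split; apply: eq_bigr => l _ /=; by rewrite mnmDE mulnDr.
Qed.

Lemma omegaMn {N : nat} (m : 'X_{1..N}) b : omega (m *+ b)%MM = (omega m * b)%N.
Proof.
rewrite /omega big_distrl; apply: eq_bigr => l _ /=; by rewrite mulmnE mulnA.
Qed.

Lemma omegaU {N : nat} (j : 'I_N) : omega (U_(j))%MM = j.
Proof.
rewrite /omega (bigD1 j) //= mnm1E eqxx muln1 big1 ?addn0 // => l hl.
by rewrite mnm1E eq_sym (negbTE hl) muln0.
Qed.

Lemma mon_t_xE {n : nat} a b (j : 'I_n.+1) :
  mon_t_x a b j = (U_(ord0) *+ a + U_(j) *+ b)%MM.
Proof.
apply/mnmP => i; rewrite mnmE mnmDE !mulmnE !mnm1E [ord0 == i]eq_sym [j == i]eq_sym.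
by case: (i == ord0); case: (i == j); rewrite ?mul1n ?mul0n.
Qed.

Lemma mon_t_x_at {n : nat} a b (j l : 'I_n.+1) :
  mon_t_x a b j l = ((if l == ord0 then a else 0) + (if l == j then b else 0))%N.
Proof. by rewrite mnmE. Qed.

Lemma mdeg_mon {n : nat} a b (j : 'I_n.+1) : mdeg (mon_t_x a b j) = (a + b)%N.
Proof. by rewrite mon_t_xE mdegD !mdegMn !mdeg1 !mul1n. Qed.

Lemma w3E {n : nat} (m : 'X_{1..n.+1}) :
  (\sum_(j < n.+1 | (1 <= j)%N) m j)%N = (mdeg m - m ord0)%N.
Proof.
rewrite mdegE big_mkcond /= [in RHS]big_ord_recl big_ord_recl /= add0n addKn.
by apply: eq_bigr.
Qed.

Lemma ord_neq {n : nat} (i j : 'I_n.+1) : (i : nat) != j -> i != j.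
Proof. by apply: contra => /eqP ->. Qed.

Lemma step_same {n : nat} (u : 'X_{1..n.+1}) {j : 'I_n.+1} : (2 <= j)%N ->
  (U_(j) + u)%MM ord0 = u ord0 /\ (U_(inord j.-1) + u)%MM ord0 = u ord0 /\
  mdeg (U_(j) + u)%MM = mdeg (U_(inord j.-1) + u)%MM.
Proof.
move=> hj; rewrite !mnmDE !mnm1E !mdegD !mdeg1.
have h1 : (j == ord0) = false.
  by apply/negbTE/ord_neq => /=; move: hj; case: (nat_of_ord j).
have h2 : ((inord j.-1 : 'I_n.+1) == ord0) = false.
  by apply/negbTE/ord_neq => /=; rewrite inordm1; move: hj; case: (nat_of_ord j) => [|[|]].
by rewrite h1 h2.
Qed.

Lemma mdeg3 {N : nat} (m : 'X_{1..N}) (i j l : 'I_N) :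
  i != j -> l != i -> l != j -> (m i + m j + m l <= mdeg m)%N.
Proof.
move=> hij hli hlj; rewrite mdegE (bigD1 i) //= (bigD1 j) /=; last by rewrite eq_sym.
rewrite (bigD1 l) /=; last by rewrite hli hlj.
lia.
Qed.

Lemma lexR {n : nat} (hn : (1 <= n)%N) a b (m : 'X_{1..n.+1}) :
  lex_lt m (mon_t_x a b (inord n)) ->
  (m ord0 < a)%N \/ (m ord0 = a /\ (mdeg m - m ord0 < b)%N).
Proof.
move=> [i [hlt hi]].
have n0 : ((inord n : 'I_n.+1) == ord0) = false.
  by apply/negbTE/ord_neq; rewrite /= inordK // -lt0n.
have n0' : ((ord0 : 'I_n.+1) == inord n) = false by rewrite eq_sym.
move: hi hlt; rewrite !mon_t_x_at.
case: (unliftP ord0 i) => [i'|] ->; last by rewrite eqxx n0' addn0; left.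
move=> hi hlt.
have hi0 : ((ord0 : 'I_n.+1) < lift ord0 i')%N by [].
have e0 := hlt ord0 hi0; rewrite mon_t_x_at eqxx n0' addn0 in e0.
have l0 : (lift ord0 i' == ord0) = false by apply/negbTE/ord_neq.
case: (boolP (lift ord0 i' == inord n)) hi => hin; last first.
  by rewrite l0 addn0 ltn0.
rewrite l0 /= add0n => hlt2; right; split => //.
have hz : forall l : 'I_n.+1, l != ord0 -> l != inord n -> m l = 0%N.
  move=> l hl0 hln; have := hlt l; rewrite mon_t_x_at (negbTE hl0) (negbTE hln) addn0.
  apply; move/eqP: hin => ->; rewrite /= inordK //.
  have : (l : nat) != n by apply: contra hln => /eqP e; apply/eqP/val_inj; rewrite /= inordK // e.
  by move=> h; rewrite ltn_neqAle h -ltnS ltn_ord.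
rewrite mdegE (bigD1 ord0) //= (bigD1 (inord n)) /=; last by rewrite n0.
rewrite big1 ?addn0; first by rewrite addKn -(eqP hin).
by move=> l /andP [h1 h2]; apply: hz.
Qed.

Lemma mdeg2 {N : nat} (m : 'X_{1..N}) (i j : 'I_N) :
  i != j -> (m i + m j <= mdeg m)%N.
Proof.
move=> hij; rewrite mdegE (bigD1 i) //= (bigD1 j) /=; last by rewrite eq_sym.
lia.
Qed.

Lemma lexQ {n : nat} (hn : (1 <= n)%N) a b (m : 'X_{1..n.+1}) :
  (m ord0 <= a)%N -> (mdeg m - m ord0 <= b)%N -> m <> mon_t_x a b (inord 1) ->
  lex_lt m (mon_t_x a b (inord 1)).
Proof.
move=> h0 hd hne.
have i1 : (inord 1 : 'I_n.+1) = 1%N :> nat by rewrite inordK.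
have n1 : ((inord 1 : 'I_n.+1) == ord0) = false by apply/negbTE/ord_neq; rewrite i1.
have n1' : ((ord0 : 'I_n.+1) == inord 1) = false by rewrite eq_sym.
case: (ltnP (m ord0) a) => ha.
  by exists ord0; split => //; rewrite mon_t_x_at eqxx n1' addn0.
have ea : m ord0 = a by apply/eqP; rewrite eqn_leq h0 ha.
case: (ltnP (m (inord 1)) b) => hb'.
  exists (inord 1); split; last by rewrite mon_t_x_at n1 eqxx add0n.
  move=> j; rewrite i1 ltnS leqn0 => /eqP j0.
  have -> : j = ord0 by apply/val_inj.
  by rewrite mon_t_x_at eqxx n1' addn0.
exfalso; apply: hne; apply/mnmP => l; rewrite mon_t_x_at.
have := mdeg2 m ord0 (inord 1) (negbT n1'); rewrite ea => h2.
case: (l =P ord0) => [->|/eqP l0]; first by rewrite n1' addn0.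
case: (l =P inord 1) => [->|/eqP l1]; first by rewrite add0n; lia.
have := mdeg3 m ord0 (inord 1) l (negbT n1') l0 l1; lia.
Qed.

Lemma intr_neq0 {k : fieldType} (chark0 : [pchar k] =i pred0) (d : int) :
  d != 0 -> (d%:~R : k) != 0.
Proof.
case: d => [m|m] h.
  by rewrite -pmulrn natr_neq0 //; apply: contra h => /eqP ->.
by rewrite NegzE mulrNz oppr_eq0 natr_neq0.
Qed.

Lemma step_inv {n : nat} (f : nat -> nat -> bool) (u : 'X_{1..n.+1}) (j : 'I_n.+1) :
  (2 <= j)%N -> f ((U_(j) + u)%MM ord0) (mdeg (U_(j) + u)%MM) ->
  f ((U_(inord j.-1) + u)%MM ord0) (mdeg (U_(inord j.-1) + u)%MM).
Proof. by move=> hj; have [e1 [e2 e3]] := step_same u hj; rewrite e1 e2 e3. Qed.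

Theorem lemma5p2 (k : fieldType) (chark0 : [pchar k] =i pred0) (n : nat)
  (hn : (3 <= n)%N) (alpha beta : nat) (ha : (1 <= alpha)%N) (hb : (1 <= beta)%N)
  (d : int) (hd : d != 0) (p : {mpoly k[n.+1]}) :
  Rset alpha beta p -> Qset alpha beta (expDprime (d%:~R) p).
Proof.
move=> [p0 [hdeg [hM0 hlex]]].
have hn1 : (1 <= n)%N by lia.
pose M0 := @mon_t_x n alpha beta (inord n).
set M := @mon_t_x n alpha beta (inord 1).
set D := (d%:~R : k).
have n0 : ((inord n : 'I_n.+1) == ord0) = false.
  by apply/negbTE/ord_neq; rewrite /= inordK // -lt0n.
have n0' : ((ord0 : 'I_n.+1) == inord n) = false by rewrite eq_sym.
have i1 : (inord 1 : 'I_n.+1) = 1%N :> nat by rewrite inordK.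
have n1 : ((inord 1 : 'I_n.+1) == ord0) = false by apply/negbTE/ord_neq; rewrite i1.
have n1' : ((ord0 : 'I_n.+1) == inord 1) = false by rewrite eq_sym.
have hM0_0 : M0 ord0 = alpha by rewrite /M0 mon_t_x_at eqxx n0' addn0.
have hM_0 : M ord0 = alpha by rewrite /M mon_t_x_at eqxx n1' addn0.
have hdM : mdeg M = (alpha + beta)%N by rewrite mdeg_mon.
have hsupp : forall m, m \in msupp p -> m = M0 \/ (m ord0 < alpha)%N \/
    (m ord0 = alpha /\ (mdeg m - m ord0 < beta)%N).
  move=> m hm; case: (eqVneq m M0) => [->|hne]; [by left | right].
  by apply: (lexR hn1); apply: hlex => // e; move: hne; rewrite e eqxx.
have hw : forall m, m \in msupp p -> (mdeg m - m ord0 <= beta)%N.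
  by move=> m hm; rewrite -w3E; apply: hdeg.
pose P1 := fun m : 'X_{1..n.+1} => (m ord0 <= alpha)%N && (mdeg m - m ord0 <= beta)%N.
have z1 : zin P1 p.
  move=> m hm; apply/eqP; rewrite mcoeff_eq0; apply: contra hm => hs.
  rewrite /P1 hw // andbT.
  by case: (hsupp m hs) => [->|[h|[h _]]]; rewrite ?hM0_0 ?h // ltnW.
have zE : zin P1 (expDprime D p).
  apply: E_zin z1 => u j hj.
  exact: (step_inv (fun x y => (x <= alpha)%N && (y - x <= beta)%N)).
have hP1 : forall m, m \in msupp (expDprime D p) -> P1 m.
  move=> m hm; apply/negPn/negP => hn'; move: hm; by rewrite mcoeff_msupp zE // eqxx.
set c := p@_M0.
have c0 : c != 0 by rewrite -mcoeff_msupp.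
set r := p - c *: 'X_[M0].
have pe : p = c *: 'X_[M0] + r by rewrite /r addrC subrK.
pose P2 := fun m : 'X_{1..n.+1} => (m ord0 != alpha) || (mdeg m - m ord0 < beta)%N.
have z2 : zin P2 r.
  move=> m hm; rewrite /r mcoeffB mcoeffZ mcoeffX.
  case: (eqVneq M0 m) => [<-|hne]; first by rewrite mulr1 subrr.
  rewrite mulr0 subr0; apply/eqP; rewrite mcoeff_eq0; apply: contra hm => hs.
  case: (hsupp m hs) => [e|[h|[h1 h2]]]; first by move: hne; rewrite e eqxx.
    by rewrite /P2 neq_ltn h.
  by rewrite /P2 h2 orbT.
have hM : ~~ P2 M by rewrite /P2 hM_0 eqxx hdM addKn ltnn.
have hit : forall i, (iter i (@Dprime k n) p)@_M = c * (iter i (@Dprime k n) 'X_[M0])@_M.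
  move=> i; rewrite pe iter_lin mcoeffD mcoeffZ.
  rewrite (@iterD_zin _ _ (fun _ => P2) r _ z2 i M hM) ?addr0 //.
  move=> _ u j hj; exact: (step_inv (fun x y => (x != alpha) || (y - x < beta)%N)).
have zO : forall i, zin (fun m => omega m + i == omega M0)%N (iter i (@Dprime k n) 'X_[M0]).
  apply: iterD_zin.
    move=> i u j hj /eqP h; apply/eqP; move: h; rewrite !omegaD !omegaU inordm1; lia.
  move=> m hm; rewrite mcoeffX; case: (eqVneq M0 m) => [e|] //.
  by move: hm; rewrite e addn0 eqxx.
have oM0 : omega M0 = (n * beta)%N.
  by rewrite /M0 mon_t_xE omegaD !omegaMn !omegaU /= inordK.
have oM : omega M = beta.
  by rewrite /M mon_t_xE omegaD !omegaMn !omegaU /= inordK // mul1n.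
have hnb : (n * beta = beta + n.-1 * beta)%N by rewrite -{1}(prednK hn1) mulSn.
have hi0 : (n.-1 * beta < (n * msize p).+1)%N.
  rewrite ltnS; apply: leq_mul; first exact: leq_pred.
  have := msize_mdeg_lt hM0; rewrite mdeg_mon; lia.
have hX : (iter (n.-1 * beta) (@Dprime k n) 'X_[M0])@_M != 0.
  apply: (@reach_pos k chark0 n 'X_[M0] M0).
  - by move=> m; exists (M0 == m : nat); rewrite mcoeffX.
  - by rewrite mcoeffX eqxx oner_neq0.
  have := all_units hn1 beta (U_(ord0) *+ alpha)%MM.
  by rewrite /M0 /M !mon_t_xE ![(U_(ord0) *+ alpha + _)%MM]addmC.
have hcoef : (expDprime D p)@_M != 0.
  rewrite E_coef (bigD1 (Ordinal hi0)) //= big1 ?addr0.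
    rewrite hit; apply: mulf_neq0; last exact: mulf_neq0.
    apply: mulf_neq0; first by apply: expf_neq0; apply: intr_neq0.
    by rewrite invr_neq0 // natr_neq0 // -lt0n fact_gt0.
  move=> i hi; rewrite hit zO ?mulr0 //.
  have : (i : nat) != n.-1 * beta by apply: contra hi => /eqP e; apply/eqP/val_inj.
  rewrite oM oM0; lia.
split; first by apply: contraTneq hcoef => ->; rewrite mcoeff0 eqxx.
split.
  by move=> m hm; rewrite w3E; have /andP [] := hP1 m hm.
split; first by rewrite mcoeff_msupp.
move=> m hm hne; have /andP [h1 h2] := hP1 m hm.
exact: lexQ.
Qed.
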